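(* For all KAT-morphisms $(\mathfrak{s},\mathfrak{t}): (\Sigma_0,T_0) \to (\Sigma_1,T_1)$ and all $e \in \mathsf{KAT}(\Sigma_0,T_0)$, we have $L(\mathrm{apply}^\mathfrak{s}_\mathfrak{t}(e)) = \mathrm{apply}^{\mathfrak{s}'}_\mathfrak{t}(L(e))$, where $\mathfrak{s}'$ is given by $\mathfrak{s}'(p) = L(\mathfrak{s}(p))$.
   Context: $\mathsf{KAT}(\Sigma,T)$ is the set of KAT expressions over action alphabet $\Sigma$ and test alphabet $T$, $\mathsf{BA}(T)$ the set of Boolean test expressions over $T$, $\mathsf{At}_T = 2^T$ the set of atoms, and $L(e)$ the guarded-string language semantics of a KAT expression $e$; $\mathcal{G}(\Sigma,T)$ denotes the set of regular guarded languages (sets of strings in $\mathsf{At}_T(\Sigma\mathsf{At}_T)^*$). Guarded composition $w\diamond x$ of $w=w'\alpha$ and $x=\alpha x'$ is $w'\alpha x'$ (defined only when the last atom of $w$ equals the first atom of $x$). A KAT-morphism $(\mathfrak{s},\mathfrak{t}):(\Sigma_0,T_0)\to(\Sigma_1,T_1)$ is a pair of functions $\mathfrak{s}:\Sigma_0\to\mathsf{KAT}(\Sigma_1,T_1)$ and $\mathfrak{t}:T_0\to\mathsf{BA}(T_1)$; on expressions, $\mathrm{apply}^\mathfrak{s}_\mathfrak{t}(e)$ is obtained from $e$ by replacing each test $t\in T_0$ by $\mathfrak{t}(t)$ and each action $p\in\Sigma_0$ by $\mathfrak{s}(p)$. For a guarded language morphism $(\mathfrak{s},\mathfrak{t})$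 with $\mathfrak{s}:\Sigma_0\to\mathcal{G}(\Sigma_1,T_1)$ and $\mathfrak{t}:T_0\to\mathsf{BA}(T_1)$: an atom $\beta\in\mathsf{At}_{T_1}$ is $\mathfrak{t}$-consistent with $\alpha\in\mathsf{At}_{T_0}$ if for all $t\in T_0$, $\alpha\le t$ iff $\beta\le\mathfrak{t}(t)$; for $L\in\mathcal{G}(\Sigma_0,T_0)$, $\mathrm{apply}_\mathfrak{t}(L)$ consists of all $\beta_0p_0\beta_1\cdots p_{n-1}\beta_n$ such that $\alpha_0p_0\alpha_1\cdots p_{n-1}\alpha_n\in L$ and each $\beta_i$ is $\mathfrak{t}$-consistent with $\alpha_i$; for $L\in\mathcal{G}(\Sigma_0,T_1)$, $\mathrm{apply}^\mathfrak{s}(L)$ consists of all $\alpha_0\diamond w_0\diamond\alpha_1\diamond\cdots\diamond\alpha_{n-1}\diamond w_{n-1}\diamond\alpha_n$ with $\alpha_0p_0\alpha_1\cdots p_{n-1}\alpha_n\in L$ and $w_i\in\mathfrak{s}(p_i)$; and $\mathrm{apply}^\mathfrak{s}_\mathfrak{t} = \mathrm{apply}^\mathfrak{s}\circ\mathrm{apply}_\mathfrak{t}$. *)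

(* Defs.v *)
From Stdlib Require Import List.
From mathcomp Require Import all_boot.
Set Implicit Arguments. Unset Strict Implicit. Unset Printing Implicit Defensive.

Inductive bexp (T : Type) : Type :=
| BZero | BOne | BVar of T | BNot of bexp T
| BAnd of bexp T & bexp T | BOr of bexp T & bexp T.
Arguments BZero {T}. Arguments BOne {T}.

Inductive kexp (S T : Type) : Type :=
| KTest of bexp T | KAct of S
| KPlus of kexp S T & kexp S T | KSeq of kexp S T & kexp S T
| KStar of kexp S T.

(** Atoms At_T = 2^T, represented as finite sets of (true) tests. *)
Definition atom (T : finType) := {set T}.

Fixpoint beval (T : finType) (a : atom T) (b : bexp T) : bool :=
  match b with
  | BZero => false | BOne => true | BVar t => t \in a
  | BNot b => ~~ beval a b
  | BAnd b c => beval a b && beval a c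
  | BOr b c => beval a b || beval a c
  end.

(** Guarded strings  alpha_0 p_0 alpha_1 ... p_{n-1} alpha_n . *)
Record gstring (S : Type) (T : finType) := GS { gs_first : atom T; gs_rest : seq (S * atom T) }.

Definition gs_last S (T : finType) (w : gstring S T) : atom T := last (gs_first w) (map snd (gs_rest w)).
Definition gs_atoms S (T : finType) (w : gstring S T) : seq (atom T) := gs_first w :: map snd (gs_rest w).
Definition gs_acts S (T : finType) (w : gstring S T) : seq S := map fst (gs_rest w).

Definition gcomp S (T : finType) (w x : gstring S T) : option (gstring S T) :=
  if gs_last w == gs_first x then Some (GS (gs_first w) (gs_rest w ++ gs_rest x)) else None.

Definition glang S (T : finType) := gstring S T -> Prop.
Definition lang_eq S (T : finType) (L1 L2 : glang S T) := forall w, L1 w <-> L2 w.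

Definition lconcat S (T : finType) (L1 L2 : glang S T) : glang S T :=
  fun z => exists w x, L1 w /\ L2 x /\ gcomp w x = Some z.
Definition lone S (T : finType) : glang S T := fun z => gs_rest z = [::].
Fixpoint lpow S (T : finType) (L : glang S T) (n : nat) : glang S T :=
  match n with 0 => @lone S T | n.+1 => lconcat L (lpow L n) end.

Fixpoint Lsem S (T : finType) (e : kexp S T) : glang S T :=
  match e with
  | KTest b => fun z => gs_rest z = [::] /\ beval (gs_first z) b
  | KAct p => fun z => exists a b, z = GS a [:: (p, b)]
  | KPlus e f => fun z => Lsem e z \/ Lsem f z
  | KSeq e f => lconcat (Lsem e) (Lsem f)
  | KStar e => fun z => exists n, lpow (Lsem e) n z
  end.

Fixpoint bapply (T0 T1 : Type) (t : T0 -> bexp T1) (b : bexp T0) : bexp T1 :=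
  match b with
  | BZero => BZero | BOne => BOne | BVar x => t x
  | BNot b => BNot (bapply t b)
  | BAnd b c => BAnd (bapply t b) (bapply t c)
  | BOr b c => BOr (bapply t b) (bapply t c)
  end.

Fixpoint kapply S0 S1 T0 T1 (s : S0 -> kexp S1 T1) (t : T0 -> bexp T1)
    (e : kexp S0 T0) : kexp S1 T1 :=
  match e with
  | KTest b => KTest _ (bapply t b)
  | KAct p => s p
  | KPlus e f => KPlus (kapply s t e) (kapply s t f)
  | KSeq e f => KSeq (kapply s t e) (kapply s t f)
  | KStar e => KStar (kapply s t e)
  end.

Definition tconsistent (T0 T1 : finType) (t : T0 -> bexp T1) (a : atom T0) (b : atom T1) :=
  forall x : T0, (x \in a) = beval b (t x).

Definition lapply_t S (T0 T1 : finType) (t : T0 -> bexp T1) (L : glang S T0) : glang S T1 :=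
  fun z => exists w, L w /\ gs_acts w = gs_acts z /\
    List.Forall2 (tconsistent t) (gs_atoms w) (gs_atoms z).

(* alpha_0 <> w_0 <> alpha_1 <> ... <> w_{n-1} <> alpha_n, built right to left *)
Fixpoint expand S0 S1 (T : finType) (s : S0 -> glang S1 T) (a : atom T)
    (r : seq (S0 * atom T)) (z : gstring S1 T) : Prop :=
  match r with
  | [::] => z = GS a [::]
  | (p, b) :: r' => exists w y1 y2 z', s p w /\ expand s b r' z' /\
      gcomp (GS a [::]) w = Some y1 /\ gcomp y1 (GS b [::]) = Some y2 /\
      gcomp y2 z' = Some z
  end.

Definition lapply_s S0 S1 (T : finType) (s : S0 -> glang S1 T) (L : glang S0 T) : glang S1 T :=
  fun z => exists u, L u /\ expand s (gs_first u) (gs_rest u) z.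

Definition lapply_st S0 S1 (T0 T1 : finType) (s : S0 -> glang S1 T1) (t : T0 -> bexp T1)
    (L : glang S0 T0) : glang S1 T1 := lapply_s s (lapply_t t L).

(* Main.v *)
Require Import Defs.
From Stdlib Require List.
From mathcomp Require Import all_boot.
Set Implicit Arguments. Unset Strict Implicit. Unset Printing Implicit Defensive.

Lemma gcompP S T (w x z : gstring S T) : gcomp w x = Some z <->
  gs_last w = gs_first x /\ z = GS (gs_first w) (gs_rest w ++ gs_rest x).
Proof.
rewrite /gcomp; case: eqP => H; split.
- by move=> [<-].
- by move=> [_ ->].
- by [].
- by case.
Qed.

Definition Rt S (T0 T1 : finType) (t : T0 -> bexp T1) (x : S * atom T0) (y : S * atom T1) :=
  x.1 = y.1 /\ tconsistent t x.2 y.2.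

Lemma relE_aux S (T0 T1 : finType) (t : T0 -> bexp T1) (r : seq (S * atom T0)) q :
  (map fst r = map fst q /\ List.Forall2 (tconsistent t) (map snd r) (map snd q)) <->
  List.Forall2 (Rt t) r q.
Proof.
elim: r q => [|[p x] r IH] [|[p' y] q] /=; split.
- by move=> _; constructor.
- by move=> _; split=> //; constructor.
- by case.
- by move=> H; inversion H.
- by case.
- by move=> H; inversion H.
- case=> E H; case: E => E1 E2; inversion H; subst; constructor; first by split.
  by apply/IH.
- move=> H; inversion H; subst. case: H3 => /= -> Hc.
  have [-> ?] := (IH q).2 H5. by split=> //; constructor.
Qed.

Lemma relE S (T0 T1 : finType) (t : T0 -> bexp T1) (w : gstring S T0) (z : gstring S T1) :
 (gs_acts w = gs_acts z /\ List.Forall2 (tconsistent t) (gs_atoms w) (gs_atoms z)) <->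
 (tconsistent t (gs_first w) (gs_first z) /\ List.Forall2 (Rt t) (gs_rest w) (gs_rest z)).
Proof.
case: w z => a r [b q]; rewrite /gs_acts /gs_atoms /=; split.
- case=> E H; inversion H; subst; split=> //; apply/relE_aux; by split.
- case=> H1 /relE_aux [E H2]; split=> //; by constructor.
Qed.

Lemma tcons_uniq (T0 T1 : finType) (t : T0 -> bexp T1) a a' b :
  tconsistent t a b -> tconsistent t a' b -> a = a'.
Proof. by move=> H H'; apply/setP=> x; rewrite H H'. Qed.

Lemma tcons_ex (T0 T1 : finType) (t : T0 -> bexp T1) b : tconsistent t [set x | beval b (t x)] b.
Proof. by move=> x; rewrite inE. Qed.

Lemma tcons_last S (T0 T1 : finType) (t : T0 -> bexp T1) r q a b :
  List.Forall2 (@Rt S _ _ t) r q -> tconsistent t a b ->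
  tconsistent t (last a (map snd r)) (last b (map snd q)).
Proof.
move=> H; elim: H a b => //= x y r' q' [_ Hc] _ IH a b _; exact: IH.
Qed.

Lemma beval_apply (T0 T1 : finType) (t : T0 -> bexp T1) a b (e : bexp T0) :
  tconsistent t a b -> beval a e = beval b (bapply t e).
Proof.
move=> H; elim: e => [| |x|e IH|e IHe f IHf|e IHe f IHf] //=.
- by rewrite IH.
- by rewrite IHe IHf.
- by rewrite IHe IHf.
Qed.

Lemma lt_concat S (T0 T1 : finType) (t : T0 -> bexp T1) (L1 L2 : glang S T0) :
  lang_eq (lapply_t t (lconcat L1 L2)) (lconcat (lapply_t t L1) (lapply_t t L2)).
Proof.
move=> [b q]; split.
- case=> w [[w1 [w2 [H1 [H2 /gcompP [El ->]]]]] /relE /= [Hf Hr]].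
  have [q1 [q2 [Hq1 [Hq2 Eq]]]] := List.Forall2_app_inv_l _ _ Hr.
  exists (GS b q1), (GS (last b (map snd q1)) q2); split; last split.
  + exists w1; split=> //; apply/relE; by split.
  + exists w2; split=> //; apply/relE; split=> //=.
    rewrite -El; exact: tcons_last.
  + by apply/gcompP; rewrite Eq.
- case=> z1 [z2 [[w1 [H1 /relE [Hf1 Hr1]]] [[w2 [H2 /relE [Hf2 Hr2]]] /gcompP [El Ez]]]].
  have El' : gs_last w1 = gs_first w2.
    apply: (tcons_uniq _ Hf2); rewrite -El; exact: tcons_last.
  exists (GS (gs_first w1) (gs_rest w1 ++ gs_rest w2)); split.
  + exists w1, w2; split=> //; split=> //; exact/gcompP.
  + apply/relE; case: Ez => -> ->; split=> //=; exact: List.Forall2_app.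
Qed.

Lemma lt_lone S (T0 T1 : finType) (t : T0 -> bexp T1) :
  lang_eq (lapply_t t (@lone S T0)) (@lone S T1).
Proof.
move=> [b q]; split.
- case=> w [Hw /relE [_ Hr]]; rewrite /lone /= in Hw *; rewrite Hw in Hr.
  by inversion Hr.
- rewrite /lone /= => ->; exists (GS [set x | beval b (t x)] [::]); split=> //.
  apply/relE; split=> /=; [exact: tcons_ex | constructor].
Qed.

Lemma expand_first_last S0 S1 (T : finType) (s : S0 -> glang S1 T) a r z :
  expand s a r z -> gs_first z = a /\ gs_last z = last a (map snd r).
Proof.
elim: r a z => [|[p b] r IH] a z /=; first by move=> ->.
case=> w [y1 [y2 [z' [Hw [He [/gcompP [E1 ->] [/gcompP [E2 ->] /gcompP [E3 ->]]]]]]]].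
have [F L] := IH _ _ He.
split=> //; rewrite /gs_last /= !map_cat !last_cat.
move: E2 E3; rewrite /gs_last /= => E2 E3.
by rewrite E2 -L /gs_last F.
Qed.

Lemma expand_cons S0 S1 (T : finType) (s : S0 -> glang S1 T) a p b r z :
  expand s a ((p, b) :: r) z <-> exists w z', s p w /\ expand s b r z' /\
    gs_first w = a /\ gs_last w = b /\ z = GS a (gs_rest w ++ gs_rest z').
Proof.
split.
- case=> w [y1 [y2 [z' [Hw [He [/gcompP [E1 ->] [/gcompP [E2 ->] /gcompP [E3 ->]]]]]]]].
  move: E1 E2 E3; rewrite /gs_last /= !cats0 => E1 E2 E3.
  exists w, z'; do 2 (split=> //); by rewrite -E1.
- case=> w [z' [Hw [He [F [L ->]]]]].
  have [F' _] := expand_first_last He.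
  exists w, (GS a (gs_rest w)), (GS a (gs_rest w)), z'; do 3 (split=> //).
  + by apply/gcompP; split=> //=; rewrite F.
  + split; apply/gcompP.
    * rewrite /= cats0; split=> //; by rewrite -L /gs_last F.
    * rewrite F'; split=> //; by rewrite -L /gs_last F.
Qed.

Lemma expand_app S0 S1 (T : finType) (s : S0 -> glang S1 T) a r1 r2 z :
  expand s a (r1 ++ r2) z <-> exists z1 z2, expand s a r1 z1 /\
    expand s (last a (map snd r1)) r2 z2 /\ gcomp z1 z2 = Some z.
Proof.
elim: r1 a z => [|[p b] r1 IH] a z.
- rewrite /=; split.
  + move=> H; exists (GS a [::]), z; do 2 (split=> //).
    have [F _] := expand_first_last H.
    by apply/gcompP; case: z F H => ? ? /= ->.
  + case=> z1 [z2 [-> [H /gcompP [E ->]]]].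
    have [F _] := expand_first_last H.
    by case: z2 F E H => ? ? /= -> _.
- rewrite cat_cons expand_cons; split.
  + case=> w [z' [Hw [He [F [L ->]]]]].
    case/IH: He => z1 [z2 [H1 [H2 /gcompP [E ->]]]].
    exists (GS a (gs_rest w ++ gs_rest z1)), z2; split; last split=> //.
    * apply/expand_cons; by exists w, z1.
    * apply/gcompP; rewrite catA; split=> //.
      have [F1 L1] := expand_first_last H1.
      rewrite -E L1 /gs_last /= map_cat last_cat.
      move: L; rewrite /gs_last -F => ->; by move: L1; rewrite /gs_last F1.
  + case=> z1 [z2 [H1 [H2 Hg]]].
    move/expand_cons: H1 => [w [z1' [Hw [He [F [L Ez1]]]]]].
    move/gcompP: Hg => [E ->]; subst z1.
    have [F1 L1] := expand_first_last He.
    exists w, (GS (gs_first z1') (gs_rest z1' ++ gs_rest z2)).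
    split=> //; split; last by split=> //; split=> //=; rewrite catA.
    apply/IH; exists z1', z2; split=> //; split; first exact: H2.
    apply/gcompP; split=> //.
    rewrite -E /gs_last /= map_cat last_cat.
    move: L; rewrite /gs_last -F => ->; by rewrite F1.
Qed.

Lemma ls_concat S0 S1 (T : finType) (s : S0 -> glang S1 T) (L1 L2 : glang S0 T) :
  lang_eq (lapply_s s (lconcat L1 L2)) (lconcat (lapply_s s L1) (lapply_s s L2)).
Proof.
move=> z; split.
- case=> u [[u1 [u2 [H1 [H2 /gcompP [E ->]]]]] /= /expand_app].
  case=> z1 [z2 [He1 [He2 Ez]]].
  exists z1, z2; split; last split=> //.
  + by exists u1.
  + exists u2; split=> //; by rewrite -E.
- case=> z1 [z2 [[u1 [H1 He1]] [[u2 [H2 He2]] Ez]]].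
  have [_ Lz1] := expand_first_last He1.
  have [F2 _] := expand_first_last He2.
  move: Ez => /gcompP [E Ez].
  exists (GS (gs_first u1) (gs_rest u1 ++ gs_rest u2)); split.
  + exists u1, u2; split=> //; split=> //; apply/gcompP; split=> //.
    by rewrite /gs_last -Lz1 E F2.
  + apply/expand_app; exists z1, z2; split=> //; split.
    * by rewrite -Lz1 E F2.
    * exact/gcompP.
Qed.

Lemma ls_lone S0 S1 (T : finType) (s : S0 -> glang S1 T) :
  lang_eq (lapply_s s (@lone S0 T)) (@lone S1 T).
Proof.
move=> z; split.
- case=> [[a r]] [Hu He]; rewrite /lone /= in Hu; subst r; by rewrite He.
- move=> Hz; exists (GS (gs_first z) [::]); split=> //=.
  by case: z Hz => a r; rewrite /lone /= => ->.
Qed.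

Lemma ls_ext S0 S1 (T : finType) (s : S0 -> glang S1 T) (L L' : glang S0 T) :
  lang_eq L L' -> lang_eq (lapply_s s L) (lapply_s s L').
Proof. move=> H z; split; case=> u [Hu He]; exists u; split=> //; exact/H. Qed.

Lemma lconcat_ext S (T : finType) (L1 L1' L2 L2' : glang S T) :
  lang_eq L1 L1' -> lang_eq L2 L2' -> lang_eq (lconcat L1 L2) (lconcat L1' L2').
Proof.
move=> H1 H2 z; split; case=> w [x [Hw [Hx E]]]; exists w, x;
  (split; [exact/H1 | split; [exact/H2 | exact: E]]).
Qed.

Lemma F_concat S0 S1 (T0 T1 : finType) (s : S0 -> glang S1 T1) (t : T0 -> bexp T1)
  (L1 L2 : glang S0 T0) :
  lang_eq (lapply_st s t (lconcat L1 L2)) (lconcat (lapply_st s t L1) (lapply_st s t L2)).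
Proof.
move=> z; rewrite /lapply_st (ls_ext s (lt_concat t L1 L2) z); exact: ls_concat.
Qed.

Lemma F_lone S0 S1 (T0 T1 : finType) (s : S0 -> glang S1 T1) (t : T0 -> bexp T1) :
  lang_eq (lapply_st s t (@lone S0 T0)) (@lone S1 T1).
Proof.
move=> z; rewrite /lapply_st (ls_ext s (@lt_lone S0 _ _ t) z); exact: ls_lone.
Qed.

Theorem proposition5p3 (S0 S1 : Type) (T0 T1 : finType)
    (s : S0 -> kexp S1 T1) (t : T0 -> bexp T1) (e : kexp S0 T0) :
  lang_eq (Lsem (kapply s t e))
          (lapply_st (fun p => Lsem (s p)) t (Lsem e)).
Proof.
elim: e => [b|p|e IHe f IHf|e IHe f IHf|e IHe] /=.
- move=> z; split.
  + case: z => a r /= [-> Hb].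
    exists (GS a [::]); split=> //.
    exists (GS [set x | beval a (t x)] [::]); split.
    * by split=> //=; rewrite (beval_apply _ (tcons_ex t a)).
    * apply/relE; split=> /=; [exact: tcons_ex | constructor].
  + case=> u [[w [[Hw Hb] /relE [Hf Hr]]] He].
    rewrite Hw in Hr; inversion Hr.
    rewrite -H /= in He; rewrite He; split=> //=; by rewrite -(beval_apply _ Hf).
- move=> z; split.
  + move=> Hz; exists (GS (gs_first z) [:: (p, gs_last z)]); split.
    * exists (GS [set x | beval (gs_first z) (t x)] [:: (p, [set x | beval (gs_last z) (t x)])]).
      split; first by do 2 eexists.
      apply/relE; split=> /=; first exact: tcons_ex.
      constructor; last constructor. split=> //=; exact: tcons_ex.
    * apply/expand_cons; exists z, (GS (gs_last z) [::]); do 2 (split=> //).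
      by case: z Hz => a r /=; rewrite cats0.
  + case=> u [[w [[a [b ->]] /relE [Hf Hr]]] He].
    inversion Hr. inversion H3. subst l'. rewrite -H1 in He; clear H1.
    case: y H2 He => p' b' [E _] He; rewrite /= in E; subst p'.
    move/expand_cons: He => [w' [z' [Hw' [He' [F [L ->]]]]]].
    rewrite /= in He'; rewrite He' /= cats0 -F.
    by case: w' Hw' {F L}.
- move=> z; rewrite (IHe z) (IHf z); split.
  + case=> [[u [[w [Hw Hr]] He]]|[u [[w [Hw Hr]] He]]]; exists u; split=> //; exists w; by [split; [left|]|split; [right|]].
  + case=> u [[w [[Hw|Hw] Hr]] He]; [left|right]; exists u; split=> //; by exists w.
- move=> z; rewrite (lconcat_ext IHe IHf z); symmetry; exact: F_concat.
- have Hn : forall n, lang_eq (lpow (Lsem (kapply s t e)) n) (lapply_st (fun p => Lsem (s p)) t (lpow (Lsem e) n)).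
    elim=> [|n IH] /= z.
    * symmetry; exact: F_lone.
    * rewrite (lconcat_ext IHe IH z); symmetry; exact: F_concat.
  move=> z; split.
  + case=> n /Hn [u [[w [Hw Hr]] He]]; exists u; split=> //; exists w; split=> //; by exists n.
  + case=> u [[w [[n Hw] Hr]] He]; exists n; apply/Hn; exists u; split=> //; by exists w.
Qed.
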